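(* Let $F$ be a probability distribution on $[0,\infty)$ with finite mean $\mu>0$, and suppose its cumulative distribution function $F$ is differentiable in a neighborhood of $\mu$ with density $f=F'$ positive on that neighborhood. Then $p^*=\mu$ is the unique maximizer of $p\mapsto \mathsf{W}(p,F)$ over $p\in\mathbb{R}_+$.
   Context: Symmetric bilateral trade: $B,S$ i.i.d. with distribution $F$. Posting price $p$, trade occurs iff $B>p\ge S$. Welfare: $\mathsf{W}(p,F)=\mathbb{E}[S]+\mathbb{E}[(B-S)\mathbf 1_{B>p\ge S}]$. *)

(* Defs.v *)
From HB Require Import structures.
From mathcomp Require Import all_boot all_order all_algebra.
From mathcomp Require Import all_classical all_reals all_analysis.
Set Implicit Arguments. Unset Strict Implicit. Unset Printing Implicit Defensive.
Import Order.TTheory GRing.Theory Num.Theory.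
Import numFieldNormedType.Exports.
Local Open Scope classical_set_scope.
Local Open Scope ring_scope.

Definition cdfF (R : realType) (P : probability R R) (x : R) : R :=
  fine (P `]-oo, x]%classic).

Definition mean (R : realType) (P : probability R R) : R :=
  Rintegral P setT (fun x => x).

(* Welfare W(p,F) = E[S] + E[(B - S) 1_{B > p >= S}] with (B,S) ~ P (x) P,
   B the first coordinate, S the second (i.i.d.). *)
Definition welfare (R : realType) (P : probability R R) (p : R) : R :=
  mean P +
  Rintegral (P \x P)%E [set z : R * R | p < z.1 /\ z.2 <= p]
            (fun z => z.1 - z.2).

(* Main.v *)
Require Import Defs.
From HB Require Import structures.
From mathcomp Require Import all_boot all_order all_algebra.
From mathcomp Require Import all_classical all_reals all_analysis.
From mathcomp Require Import measurable_realfun.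
From mathcomp Require Import ring lra.
Import Order.TTheory GRing.Theory Num.Theory.
Import numFieldNormedType.Exports.
Local Open Scope classical_set_scope.
Local Open Scope ring_scope.

Section S.
Variables (R : realType) (P : probability R R).

Lemma int_fin (a : R -> R) : P.-integrable setT (EFin \o a) ->
  (\int[P]_x (a x)%:E)%E = (Rintegral P setT a)%:E.
Proof. by move=> ia; rewrite /Rintegral fineK //; exact: integrable_fin_num. Qed.

Lemma prodR (a b : R -> R) :
  P.-integrable setT (EFin \o a) -> P.-integrable setT (EFin \o b) ->
  (P \x P)%E.-integrable setT (EFin \o (fun z : R * R => a z.1 * b z.2)) /\
  Rintegral (P \x P)%E setT (fun z : R * R => a z.1 * b z.2) =
  Rintegral P setT a * Rintegral P setT b.
Proof.
move=> ia ib.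
have ma : measurable_fun setT a by apply/measurable_EFinP; exact: measurable_int ia.
have mb : measurable_fun setT b by apply/measurable_EFinP; exact: measurable_int ib.
have mf : measurable_fun setT (EFin \o (fun z : R * R => a z.1 * b z.2)).
  apply/measurable_EFinP; apply: measurable_funM.
    exact: measurableT_comp ma measurable_fst.
  exact: measurableT_comp mb measurable_snd.
have ifab : (P \x P)%E.-integrable setT (EFin \o (fun z : R * R => a z.1 * b z.2)).
  apply/(@integrable12ltyP _ _ _ _ _ P P _ mf).
  have /integrableP[_ Ca] := ia.
  have /integrableP[_ Cb] := ib.
  have mab : measurable_fun setT (fun y => `|(b y)%:E|)%E.
    by apply: measurableT_comp => //; exact/measurable_EFinP.
  have maa : measurable_fun setT (fun y => `|(a y)%:E|)%E.
    by apply: measurableT_comp => //; exact/measurable_EFinP.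
  rewrite (eq_integral (fun x => `|(a x)%:E| * \int[P]_y `|(b y)%:E|)%E); last first.
    move=> x _ /=.
    under eq_integral do rewrite normrM EFinM.
    by rewrite ge0_integralZl_EFin.
  rewrite ge0_integralZr //; last by apply: integral_ge0.
  by apply: lte_mul_pinfty => //; rewrite ?ge0_fin_numE //; apply: integral_ge0.
split => //.
rewrite /Rintegral -(@integral12_prod_meas1 _ _ _ _ _ P P) //.
rewrite (eq_integral (fun x => (a x)%:E * (Rintegral P setT b)%:E))%E; last first.
  move=> x _; rewrite /fubini_F /=.
  under eq_integral do rewrite EFinM.
  by rewrite integralZl // int_fin.
by rewrite integralZr // int_fin.
Qed.

Lemma intR (f : R -> R) (D : set R) : measurable D ->
  P.-integrable setT (EFin \o f) -> P.-integrable setT (EFin \o (f \_ D)).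
Proof.
move=> mD i; rewrite -restrict_EFin; apply: (integrable_mkcond _ mD).1.
exact: (integrableS measurableT mD (@subsetT _ D) i).
Qed.

Lemma int1 (D : set R) : measurable D -> P.-integrable D (EFin \o (fun _ : R => 1)).
Proof. by move=> mD; apply: finite_measure_integrable_cst. Qed.

Definition I1 (p : R) := `]p, +oo[%classic.
Definition I2 (p : R) := `]-oo, p]%classic.
Definition M p := Rintegral P (I1 p) (fun x => x).
Definition L p := Rintegral P (I2 p) (fun x => x).
Definition T p := Rintegral P (I1 p) (fun _ => 1).
Definition F p := Rintegral P (I2 p) (fun _ => 1).

Lemma I12 p : [set: R] = I1 p `|` I2 p.
Proof.
apply/seteqP; split => x //= _.
rewrite /I1 /I2 /= !in_itv /= andbT.
by case: (ltP p x) => H; [left|right].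
Qed.

Lemma I12d p : [disjoint I1 p & I2 p].
Proof.
apply/disj_setPS => x /=.
rewrite /I1 /I2 /= !in_itv /= andbT => -[H1 H2].
by move: (lt_le_trans H1 H2); rewrite ltxx.
Qed.

Hypothesis Hint : P.-integrable setT (fun x : R => x%:E).

Lemma ML p : M p + L p = mean P.
Proof.
rewrite /M /L /mean -Rintegral_setU -?I12 //.
- exact: measurable_itv.
- exact: measurable_itv.
- exact: I12d.
Qed.

Lemma inI1 p x : (x \in I1 p) = (p < x).
Proof.
apply/idP/idP => [/set_mem|h]; last apply/mem_set; by rewrite /I1 /= in_itv /= andbT.
Qed.
Lemma inI2 p x : (x \in I2 p) = (x <= p).
Proof.
apply/idP/idP => [/set_mem|h]; last apply/mem_set; by rewrite /I2 /= in_itv /=.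
Qed.
Lemma inA p z : (z \in [set z : R * R | p < z.1 /\ z.2 <= p]) = (p < z.1) && (z.2 <= p).
Proof.
apply/idP/idP => [/set_mem /= [-> ->] //|/andP h]; by apply/mem_set.
Qed.

Lemma mI1 p : measurable (I1 p). Proof. exact: measurable_itv. Qed.
Lemma mI2 p : measurable (I2 p). Proof. exact: measurable_itv. Qed.

Lemma TF p : T p + F p = 1.
Proof.
rewrite /T /F -Rintegral_setU -?I12 //.
- by rewrite Rintegral_cst // mul1r; exact: (congr1 fine (probability_setT P)).
- exact: mI1.
- exact: mI2.
- exact: int1.
- exact: I12d.
Qed.

Lemma Fcdf p : F p = cdfF P p.
Proof. by rewrite /F Rintegral_cst ?mul1r //; exact: mI2. Qed.

Lemma Wform p : welfare P p = mean P + (M p * F p - T p * L p).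
Proof.
rewrite /welfare; congr (_ + _).
rewrite Rintegral_mkcond.
set a1 := (fun x : R => x) \_ (I1 p).
set b1 := (fun _ : R => (1 : R)) \_ (I2 p).
set a2 := (fun _ : R => (1 : R)) \_ (I1 p).
set b2 := (fun x : R => x) \_ (I2 p).
have -> : ((fun z : R * R => z.1 - z.2) \_ [set z : R * R | p < z.1 /\ z.2 <= p]) =
   (fun z => a1 z.1 * b1 z.2 - a2 z.1 * b2 z.2).
{ apply/funext => z; rewrite /a1 /b1 /a2 /b2 !patchE.
  rewrite inA !inI1 !inI2.
  case: (ltP p z.1) => h1; case: (leP z.2 p) => h2 /=.
  all: rewrite ?mulr1 ?mul1r //.
  all: rewrite /point /= ?mulr0 ?mul0r ?subr0; reflexivity. }
have ia1 : P.-integrable setT (EFin \o a1) by apply: intR => //; exact: mI1.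
have ia2 : P.-integrable setT (EFin \o a2).
  by apply: intR; [exact: mI1| exact: int1].
have ib1 : P.-integrable setT (EFin \o b1).
  by apply: intR; [exact: mI2| exact: int1].
have ib2 : P.-integrable setT (EFin \o b2) by apply: intR => //; exact: mI2.
have [i1 e1] := prodR a1 b1 ia1 ib1.
have [i2 e2] := prodR a2 b2 ia2 ib2.
transitivity (Rintegral (P \x P)%E setT (fun z => a1 z.1 * b1 z.2) -
  Rintegral (P \x P)%E setT (fun z => a2 z.1 * b2 z.2)).
  exact: RintegralB.
rewrite e1 e2 /a1 /b1 /a2 /b2 -!Rintegral_mkcond.
by [].
Qed.

Definition h p := M p - mean P * T p.

Lemma Wh p : welfare P p = mean P + h p.
Proof.
rewrite Wform /h.
have -> : F p = 1 - T p by rewrite -(TF p); ring.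
have -> : L p = mean P - M p by rewrite -(ML p); ring.
ring.
Qed.

Definition J (p q : R) := `]p, q]%classic.
Lemma mJ p q : measurable (J p q). Proof. exact: measurable_itv. Qed.

Lemma splitI (f : R -> R) p q : p < q -> P.-integrable setT (EFin \o f) ->
  Rintegral P (I1 p) f = Rintegral P (J p q) f + Rintegral P (I1 q) f.
Proof.
move=> pq i.
have -> : I1 p = J p q `|` I1 q.
  apply/seteqP; split => x /=; rewrite /I1 /J /= !in_itv /= ?andbT.
    by move=> px; case: (leP x q) => xq; [left; rewrite px | right].
  by case=> [/andP[] //|]; apply: lt_trans.
apply: Rintegral_setU.
- exact: mJ.
- exact: mI1.
- apply: (integrableS measurableT _ (@subsetT _ _) i).
  by apply: measurableU; [exact: mJ|exact: mI1].
- apply/disj_setPS => x /=; rewrite /I1 /J /= !in_itv /= andbT.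
  by case=> /andP[_ h1] h2; move: (le_lt_trans h1 h2); rewrite ltxx.
Qed.

Lemma Dh p q : p < q ->
  h p - h q = Rintegral P (J p q) (fun x => x - mean P).
Proof.
move=> pq.
rewrite /h /M /T (splitI (fun x : R => x) p q pq Hint) (splitI (fun _ : R => (1:R)) p q pq (@int1 setT measurableT)).
rewrite RintegralB; last first.
- exact: (@finite_measure_integrable_cst _ _ _ P (J p q) (mean P) (mJ p q)).
- exact: (integrableS measurableT (mJ p q) (@subsetT _ _) Hint).
- exact: mJ.
rewrite (Rintegral_cst _ (mJ p q)) (Rintegral_cst _ (mJ p q)).
ring.
Qed.

Lemma iJx p q : P.-integrable (J p q) (EFin \o (fun x => x - mean P)).
Proof.
have mJ' := mJ p q.
apply: (integrableS measurableT mJ' (@subsetT _ _)).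
rewrite (_ : EFin \o _ = ((EFin \o (fun x => x)) \- (EFin \o (fun=> mean P)))%E) //.
apply: integrableB => //.
exact: (@finite_measure_integrable_cst _ _ _ P setT (mean P) measurableT).
Qed.

Lemma PJ r r' : r < r' -> fine (P (J r r')) = F r' - F r.
Proof.
move=> rr.
have := splitI (fun _ : R => (1:R)) r r' rr (@int1 setT measurableT).
rewrite (Rintegral_cst _ (mJ r r')) mul1r -/(T r) -/(T r') => S.
have e1 := TF r; have e2 := TF r'.
lra.
Qed.

Lemma Dup p q c : p < q -> (forall x, p < x <= q -> x - mean P <= c) ->
  Rintegral P (J p q) (fun x => x - mean P) <= c * (F q - F p).
Proof.
move=> pq H; rewrite -(PJ p q pq) -(Rintegral_cst _ (mJ p q)).
apply: le_Rintegral.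
- exact: mJ.
- exact: iJx.
- exact: (@finite_measure_integrable_cst _ _ _ P (J p q) c (mJ p q)).
- by move=> x; rewrite /J /= in_itv /=; apply: H.
Qed.

Lemma Dlo p q c : p < q -> (forall x, p < x <= q -> c <= x - mean P) ->
  c * (F q - F p) <= Rintegral P (J p q) (fun x => x - mean P).
Proof.
move=> pq H; rewrite -(PJ p q pq) -(Rintegral_cst _ (mJ p q)).
apply: le_Rintegral.
- exact: mJ.
- exact: (@finite_measure_integrable_cst _ _ _ P (J p q) c (mJ p q)).
- exact: iJx.
- by move=> x; rewrite /J /= in_itv /=; apply: H.
Qed.

Lemma Fmono p q : p < q -> F p <= F q.
Proof.
move=> pq; rewrite -subr_ge0 -(PJ p q pq); apply: fine_ge0; exact: measure_ge0.
Qed.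

Lemma hinc p q : p <= q -> q <= mean P -> h p <= h q.
Proof.
rewrite le_eqVlt => /predU1P[-> //|pq] qm.
rewrite -subr_le0 Dh //; apply: le_trans (Dup p q 0 pq _) _.
  by move=> x /andP[_ xq]; rewrite subr_le0 (le_trans xq).
by rewrite mul0r.
Qed.

Lemma hdec p q : mean P <= p -> p <= q -> h q <= h p.
Proof.
move=> mp; rewrite le_eqVlt => /predU1P[-> //|pq].
rewrite -subr_ge0 Dh //; apply: le_trans _ (Dlo p q 0 pq _).
  by rewrite mul0r.
by move=> x /andP[px _]; rewrite subr_ge0 (le_trans mp) // ltW.
Qed.

Lemma hlt_l r r' : r < r' -> r' < mean P -> F r < F r' -> h r < h r'.
Proof.
move=> rr rm Fr; rewrite -subr_lt0 Dh //.
apply: le_lt_trans (Dup r r' (r' - mean P) rr _) _.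
  by move=> x /andP[_ xq]; rewrite lerB.
by rewrite nmulr_rlt0 ?subr_lt0 ?subr_gt0.
Qed.

Lemma hlt_r r r' : mean P < r -> r < r' -> F r < F r' -> h r' < h r.
Proof.
move=> mr rr Fr; rewrite -subr_gt0 Dh //.
apply: lt_le_trans _ (Dlo r r' (r - mean P) rr _).
  by rewrite mulr_gt0 ?subr_gt0.
by move=> x /andP[rx _]; rewrite lerB // ltW.
Qed.

Lemma Fstrict e : 0 < e ->
  (forall x : R, `|x - mean P| < e ->
       derivable (cdfF P) x 1 /\ 0 < derive1 (cdfF P) x) ->
  forall x y, mean P - e < x -> x < y -> y < mean P + e -> F x < F y.
Proof.
move=> e0 Hd x y ex xy ye.
have inb z : x <= z -> z <= y -> `|z - mean P| < e.
  by move=> xz zy; rewrite ltr_norml; apply/andP; split; lra.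
rewrite !Fcdf.
apply: (@gtr0_derive1_incr _ (cdfF P) x y) => //.
- move=> z; rewrite in_itv /= => /andP[h1 h2].
  by apply: (Hd z (inb z (ltW h1) (ltW h2))).1.
- move=> z; rewrite in_itv /= => /andP[h1 h2].
  by apply: (Hd z (inb z (ltW h1) (ltW h2))).2.
- apply: derivable_within_continuous => z; rewrite in_itv /= => /andP[h1 h2].
  by apply: (Hd z (inb z h1 h2)).1.
Qed.
End S.

Theorem corollary5 (R : realType) (P : probability R R)
  (Hsupp : P `[0, +oo[%classic = 1%E)
  (Hint : P.-integrable setT (fun x : R => x%:E))
  (Hmu : 0 < mean P)
  (Hdens : exists2 e : R, 0 < e &
     forall x : R, `|x - mean P| < e ->
       derivable (cdfF P) x 1 /\ 0 < derive1 (cdfF P) x) :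
  0 <= mean P /\
  (forall p : R, 0 <= p -> welfare P p <= welfare P (mean P)) /\
  (forall p : R, 0 <= p -> welfare P p = welfare P (mean P) -> p = mean P).
Proof.
split; first exact: ltW.
have Wle p : welfare P p <= welfare P (mean P).
  rewrite !(@Wh R P Hint) lerD2l.
  case: (ltgtP p (mean P)) => H.
  - exact: (@hinc R P Hint p (mean P) (ltW H) (lexx _)).
  - exact: (@hdec R P Hint (mean P) p (lexx _) (ltW H)).
  - by rewrite H.
split => [p _ | p _]; first exact: Wle.
rewrite !(@Wh R P Hint) => /addrI E.
case: Hdens => e e0 Hd.
have Fs := @Fstrict R P e e0 Hd.
case: (ltgtP p (mean P)) => H //; exfalso.
- pose r := if p <= mean P - e / 2 then mean P - e / 2 else p.
  have [pr [rm er]] : p <= r /\ r < mean P /\ mean P - e < r.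
    rewrite /r; case: ifPn => H2; first lra.
    rewrite -ltNge in H2; lra.
  pose r' := (r + mean P) / 2.
  have : h R P p < h R P (mean P).
    apply: le_lt_trans (@hinc R P Hint p r pr (ltW rm)) _.
    apply: lt_le_trans (@hlt_l R P Hint r r' _ _ (Fs r r' _ _ _)) _; rewrite /r'; try lra.
    apply: (@hinc R P Hint); lra.
  by rewrite E ltxx.
- pose r := if mean P + e / 2 <= p then mean P + e / 2 else p.
  have [pr [rm er]] : r <= p /\ mean P < r /\ r < mean P + e.
    rewrite /r; case: ifPn => H2; first lra.
    rewrite -ltNge in H2; lra.
  pose r' := (r + mean P) / 2.
  have : h R P p < h R P (mean P).
    apply: le_lt_trans (@hdec R P Hint r p (ltW rm) pr) _.
    apply: lt_le_trans (@hlt_r R P Hint r' r _ _ (Fs r' r _ _ _)) _; rewrite /r'; try lra.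
    apply: (@hdec R P Hint); lra.
  by rewrite E ltxx.
Qed.
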